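(* Let $V$ be a finite dimensional real inner product space and let $X_1,\dots,X_n$ be self-adjoint elements of $\mathrm{End}(V)$ with $[X_i,X_j]=0$ for all $1\le i,j\le n$. Then there exists a constant $C>0$ such that for all $v\in V$ \[ C\Big(\sum_{i,j=1}^n\langle X_iv,v\rangle\langle X_jv,v\rangle\langle X_iv,X_jv\rangle\Big)^2\ \ge\ \Big(\sum_{i=1}^n\langle X_iv,v\rangle^2\Big)^3. \] *)

(* Defs.v *)
From HB Require Import structures.
From mathcomp Require Import all_boot all_order all_algebra.
Set Implicit Arguments. Unset Strict Implicit. Unset Printing Implicit Defensive.
Import Order.TTheory GRing.Theory Num.Theory.
Local Open Scope ring_scope.

(* The model of a d-dimensional real inner product space: row vectors
   'rV[R]_d with the standard inner product <u, w> = sum_k u_k w_k. *)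
Definition ip (R : rcfType) (d : nat) (u w : 'rV[R]_d) : R := (u *m w^T) 0 0.

(* Main.v *)
Require Import Defs.
From HB Require Import structures.
From mathcomp Require Import all_boot all_order all_algebra.
From mathcomp Require Import ring lra.
From mathcomp Require Import complex spectral sesquilinear.
Import Order.TTheory GRing.Theory Num.Theory.
Set Implicit Arguments. Unset Strict Implicit. Unset Printing Implicit Defensive.
Local Open Scope ring_scope.

Section LP.
Variable R : rcfType.

Lemma CS (m : nat) (w x y : 'I_m -> R) : (forall k, 0 <= w k) ->
  (\sum_k w k * x k * y k) ^+ 2 <= (\sum_k w k * x k ^+ 2) * (\sum_k w k * y k ^+ 2).
Proof.
move=> w0; set B := \sum_k _; set Q := \sum_k w k * x k ^+ 2; set D := \sum_k w k * y k ^+ 2.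
have Q0 : 0 <= Q by apply: sumr_ge0 => k _; rewrite mulr_ge0 // sqr_ge0.
have D0 : 0 <= D by apply: sumr_ge0 => k _; rewrite mulr_ge0 // sqr_ge0.
have H : 0 <= Q * (Q * D - B ^+ 2).
  have E k : w k * (x k * B - y k * Q) ^+ 2 =
     (w k * x k ^+ 2) * B ^+ 2 - (w k * x k * y k) * (2 * B * Q) + (w k * y k ^+ 2) * Q ^+ 2.
    by ring.
  have -> : Q * (Q * D - B ^+ 2) = \sum_k w k * (x k * B - y k * Q) ^+ 2.
    rewrite (eq_bigr _ (fun k _ => E k)) big_split /= sumrB -!mulr_suml.
    rewrite -/B -/Q -/D; ring.
  by apply: sumr_ge0 => k _; rewrite mulr_ge0 // sqr_ge0.
have [Qz|Qp] := eqVneq Q 0.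
  have B0 : B = 0.
    have hz := psumr_eq0P (fun k _ => mulr_ge0 (w0 k) (sqr_ge0 (x k))) Qz.
    apply: big1 => k _; have := hz k isT; move/eqP; rewrite mulf_eq0 sqrf_eq0.
    by case/orP => /eqP ->; rewrite ?mul0r ?mulr0 ?mul0r.
  by rewrite B0 expr0n /= mulr_ge0.
have Qgt : 0 < Q by rewrite lt_def Qp Q0.
nra.
Qed.
Variable n : nat.

Definition av d (L : 'M[R]_(d,n)) (p : 'I_d -> R) (i : 'I_n) := \sum_(k < d) p k * L k i.
Definition tv d (L : 'M[R]_(d,n)) p (k : 'I_d) := \sum_(i < n) av L p i * L k i.
Definition Av d (L : 'M[R]_(d,n)) p := \sum_(i < n) av L p i ^+ 2.
Definition Sv d (L : 'M[R]_(d,n)) p := \sum_(k < d) p k * tv L p k ^+ 2.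

Lemma Av_ge0 d (L : 'M[R]_(d,n)) p : 0 <= Av L p.
Proof. by apply: sumr_ge0 => i _; rewrite sqr_ge0. Qed.

Lemma Sv_ge0 d (L : 'M[R]_(d,n)) p : (forall k, 0 <= p k) -> 0 <= Sv L p.
Proof. by move=> p0; apply: sumr_ge0 => i _; rewrite mulr_ge0 ?sqr_ge0. Qed.

Lemma AvE d (L : 'M[R]_(d,n)) p : Av L p = \sum_k p k * tv L p k.
Proof.
rewrite /Av /tv; under [RHS]eq_bigr do rewrite mulr_sumr.
rewrite exchange_big /=; apply: eq_bigr => i _.
rewrite expr2 {1}/av mulr_suml; apply: eq_bigr => k _; ring.
Qed.

Lemma indep_case d (L : 'M[R]_(d,n)) : row_free L ->
  exists2 K : R, 0 < K & forall p : 'I_d -> R, (forall k, 0 <= p k) -> Av L p ^+ 3 <= K * Sv L p ^+ 2.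
Proof.
move=> /row_freeP [N LN].
pose c i := \sum_(k < d) N i k.
have s0 : 0 <= \sum_i c i ^+ 2 by apply: sumr_ge0 => i _; rewrite sqr_ge0.
exists (1 + \sum_i c i ^+ 2); first by lra.
move=> p p0.
have pk k : p k = \sum_i av L p i * N i k.
  rewrite /av; under eq_bigr do rewrite mulr_suml.
  rewrite exchange_big /=.
  rewrite (bigD1 k) //= [X in _ + X]big1 ?addr0.
    have := congr1 (fun A : 'M[R]_d => A k k) LN; rewrite !mxE eqxx /= => E.
    transitivity (p k * \sum_i L k i * N i k); first by rewrite E mulr1.
    rewrite mulr_sumr; apply: eq_bigr => i _; ring.
  move=> l lk; have := congr1 (fun A : 'M[R]_d => A l k) LN; rewrite !mxE (negbTE lk) /= => E.
  transitivity (p l * \sum_i L l i * N i k); last by rewrite E mulr0.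
  rewrite mulr_sumr; apply: eq_bigr => i _; ring.
have P2 : (\sum_k p k) ^+ 2 <= (\sum_i c i ^+ 2) * Av L p.
  have -> : \sum_k p k = \sum_i 1 * c i * av L p i.
    rewrite (eq_bigr _ (fun k _ => pk k)) exchange_big /=; apply: eq_bigr => i _.
    by rewrite mul1r mulr_suml; apply: eq_bigr => k _; ring.
  have := @CS _ (fun _ => 1) c (av L p) (fun _ => ler01).
  by rewrite /Av; under [in X in _ <= X -> _]eq_bigr do rewrite mul1r;
     under [in X in _ <= _ * X -> _]eq_bigr do rewrite mul1r.
have A2 : Av L p ^+ 2 <= (\sum_k p k) * Sv L p.
  have := @CS _ p (fun _ => 1) (tv L p) p0.
  rewrite /Sv AvE.
  under eq_bigr do rewrite mulr1.
  by under [in X in _ <= X -> _]eq_bigr do rewrite expr1n mulr1.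
have A0 := Av_ge0 L p; have S0 := Sv_ge0 L p0.
have P0 : 0 <= \sum_k p k by apply: sumr_ge0.
set A := Av L p in A2 P2 A0 *; set S := Sv L p in A2 S0 *; set P := \sum_k p k in A2 P2 P0.
set s := \sum_i c i ^+ 2 in s0 P2 *.
have h1 : A ^+ 2 * A ^+ 2 <= (P * S) * (P * S) by nra.
have h2 : (P * S) * (P * S) <= s * A * S ^+ 2.
  have -> : P * S * (P * S) = P ^+ 2 * S ^+ 2 by ring.
  by apply: ler_wpM2r; rewrite ?sqr_ge0.
have [Az|Ap] := eqVneq A 0.
  by rewrite Az expr0n /= mulr_ge0 ?sqr_ge0 //; lra.
have Agt : 0 < A by rewrite lt_def Ap A0.
have h3 : A * A ^+ 3 <= A * (s * S ^+ 2).
  by have := le_trans h1 h2; rewrite -!exprD /= => h; nra.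
rewrite ler_pM2l // in h3.
apply: (le_trans h3); apply: ler_wpM2r; rewrite ?sqr_ge0 //; lra.
Qed.

Lemma gamma_ex m (M : 'M[R]_(m, n)) (u : 'rV[R]_m) (t : 'I_m -> R) :
  u != 0 -> u *m M = 0 ->
  exists g : 'I_m -> R, [/\ forall i, \sum_k g k * M k i = 0,
     \sum_k g k * t k ^+ 2 <= 0 & exists k, g k < 0].
Proof.
move=> u0 uM.
have [k0 hk0] : exists k, u 0 k != 0.
  case: (pickP (fun k => u 0 k != 0)) => [k hk|h]; first by exists k.
  by case/eqP: u0; apply/rowP => k; rewrite mxE; move/negbFE: (h k) => /eqP.
have hM c i : \sum_k (c * u 0 k) * M k i = 0.
  have := congr1 (fun A : 'rV[R]_n => A 0 i) uM; rewrite !mxE => E.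
  transitivity (c * \sum_k u 0 k * M k i); last by rewrite E mulr0.
  by rewrite mulr_sumr; apply: eq_bigr => k _; rewrite mulrA.
pose sg := \sum_k u 0 k * t k ^+ 2.
suff H c : c != 0 -> c * sg <= 0 -> exists g : 'I_m -> R, [/\ forall i, \sum_k g k * M k i = 0,
     \sum_k g k * t k ^+ 2 <= 0 & exists k, g k < 0].
  case: (leP sg 0) => hs.
    by apply: (H 1); rewrite ?oner_eq0 ?mul1r.
  by apply: (H (-1)); rewrite ?oppr_eq0 ?oner_eq0 // mulN1r oppr_le0 ltW.
move=> c0 hc.
have Eg : \sum_k (c * u 0 k) * t k ^+ 2 = c * sg.
  by rewrite /sg mulr_sumr; apply: eq_bigr => k _; rewrite mulrA.
case: (pickP (fun k => c * u 0 k < 0)) => [k hk|hnone].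
  by exists (fun k => c * u 0 k); split => //; [rewrite Eg | exists k].
have pos k : 0 <= c * u 0 k by rewrite leNgt hnone.
have sg0 : 0 <= c * sg by rewrite -Eg; apply: sumr_ge0 => k _; rewrite mulr_ge0 ?sqr_ge0.
exists (fun k => - (c * u 0 k)); split.
- move=> i; transitivity (- \sum_k (c * u 0 k) * M k i); last by rewrite hM oppr0.
  by rewrite -sumrN; apply: eq_bigr => k _ /=; rewrite mulNr.
- rewrite (eq_bigr (fun k => - ((c * u 0 k) * t k ^+ 2))); last by move=> k _; rewrite mulNr.
  by rewrite sumrN Eg oppr_le0.
- exists k0; rewrite oppr_lt0 lt_def pos andbT mulf_neq0 //.
Qed.

Lemma mainL d (L : 'M[R]_(d,n)) :
  exists2 K : R, 0 < K & forall p : 'I_d -> R, (forall k, 0 <= p k) -> Av L p ^+ 3 <= K * Sv L p ^+ 2.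
Proof.
elim: d L => [|d IH] L.
  by apply: indep_case; rewrite /row_free eqn_leq rank_leq_row.
case: (boolP (row_free L)) => [/indep_case //|nfree].
pose u := nz_row (kermx L).
have u0 : u != 0 by rewrite nz_row_eq0 kermx_eq0.
have uL : u *m L = 0 by apply/sub_kermxP; exact: nz_row_sub.
have : forall k0 : 'I_d.+1, exists K : R, 0 < K /\ forall p : 'I_d -> R, (forall k, 0 <= p k) ->
    Av (row' k0 L) p ^+ 3 <= K * Sv (row' k0 L) p ^+ 2.
  by move=> k0; have [K K0 HK] := IH (row' k0 L); exists K.
case/fin_all_exists => Kf HKf.
have Kf0 k : 0 <= Kf k by have [/ltW] := HKf k.
have sK : 0 <= \sum_k Kf k by apply: sumr_ge0.
exists (1 + \sum_k Kf k); first by lra.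
move=> p p0.
set t := tv L p.
have [g [gM gt [kn kneg]]] := gamma_ex t u0 uL.
have [k0 hk0 hmin] := @extremumP R 'I_d.+1 <=%R kn (fun k => g k < 0) (fun k => p k / - g k)
  (@le_refl _ R) (@le_trans _ R) (@le_total _ R) kneg.
pose s := p k0 / - g k0.
have s0 : 0 <= s by rewrite divr_ge0 // oppr_ge0 ltW.
pose p' k := p k + s * g k.
have p'0 k : 0 <= p' k.
  rewrite /p'; case: (ltP (g k) 0) => hg.
    have := hmin k hg; rewrite -/s ler_pdivlMr ?oppr_gt0 // mulrN => h; lra.
  by rewrite addr_ge0 // mulr_ge0.
have p'k0 : p' k0 = 0.
  rewrite /p' /s; have gn : g k0 != 0 by rewrite lt_eqF.
  by field.
have avE : av L p' =1 av L p.
  move=> i; rewrite /av; under eq_bigr do rewrite mulrDl; rewrite big_split /=.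
  rewrite [X in _ + X](_ : _ = s * \sum_k g k * L k i) ?gM ?mulr0 ?addr0 //.
  by transitivity (s * \sum_k g k * L k i); [rewrite mulr_sumr; apply: eq_bigr => k _; rewrite mulrA | rewrite gM mulr0].
have tvE : tv L p' =1 t by move=> k; rewrite /t /tv; apply: eq_bigr => i _; rewrite avE.
have SvE : Sv L p' <= Sv L p.
  rewrite /Sv; under eq_bigr do rewrite tvE mulrDl; rewrite big_split /=.
  rewrite -/t [X in _ + X](_ : _ = s * \sum_k g k * t k ^+ 2).
    by rewrite gerDl; apply: mulr_ge0_le0.
  by rewrite mulr_sumr; apply: eq_bigr => k _; rewrite mulrA.
pose p'' j := p' (lift k0 j).
have av'' : av (row' k0 L) p'' =1 av L p.
  move=> i; rewrite -avE /av (bigD1_ord k0) //= p'k0 mul0r add0r.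
  by apply: eq_bigr => j _; rewrite mxE.
have tv'' j : tv (row' k0 L) p'' j = t (lift k0 j).
  by rewrite /tv; apply: eq_bigr => i _; rewrite av'' mxE.
have Av'' : Av (row' k0 L) p'' = Av L p by apply: eq_bigr => i _; rewrite av''.
have Sv'' : Sv (row' k0 L) p'' = Sv L p'.
  rewrite [RHS]/Sv (bigD1_ord k0) //= p'k0 mul0r add0r.
  by apply: eq_bigr => j _; rewrite tv'' tvE.
have [_ H] := HKf k0.
have := H p'' (fun j => p'0 _); rewrite Av'' Sv'' => h.
apply: (le_trans h); apply: ler_pM => //.
- by rewrite sqr_ge0.
- by rewrite -[leLHS]add0r lerD // (bigD1 k0) //= lerDl sumr_ge0.
- by apply: lerXn2r; rewrite ?nnegrE ?Sv_ge0.
Qed.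

Lemma SvE d (L : 'M[R]_(d,n)) p : Sv L p =
  \sum_i \sum_j av L p i * av L p j * \sum_k p k * (L k i * L k j).
Proof.
transitivity (\sum_k \sum_i \sum_j p k * (av L p i * L k i) * (av L p j * L k j)).
  apply: eq_bigr => k _; rewrite /tv expr2 big_distrlr /= mulr_sumr; apply: eq_bigr => i _.
  rewrite mulr_sumr; apply: eq_bigr => j _; ring.
rewrite exchange_big /=; apply: eq_bigr => i _.
rewrite exchange_big /=; apply: eq_bigr => j _.
rewrite mulr_sumr; apply: eq_bigr => k _; ring.
Qed.
End LP.

Section Cx.
Variable R : rcfType.
Local Open Scope sesquilinear_scope.
Local Notation C := (R[i]).
Local Notation fC := (real_complex R).

Lemma conj_fC (x : R) : (fC x)^* = fC x.
Proof. by apply/CrealP/complex_realP; exists x. Qed.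

Lemma mapC_real m p (A : 'M[R]_(m,p)) : (map_mx fC A) ^ Num.conj = map_mx fC A.
Proof. by apply/matrixP => i j; rewrite !mxE conj_fC. Qed.

Lemma real_of_C (z : C) : z^* = z -> z = fC (complex.Re z).
Proof. by move=> /CrealP/RRe_real. Qed.

Lemma diag_form d (w : 'rV[C]_d) (mu : 'rV[R]_d) :
  (w *m diag_mx (map_mx fC mu) *m w^t*) 0 0 =
  fC (\sum_k complex.Re (w 0 k * (w 0 k)^*) * mu 0 k).
Proof.
rewrite mul_mx_diag !mxE rmorph_sum /=; apply: eq_bigr => k _.
rewrite !mxE rmorphM /= -(real_of_C (z := w 0 k * (w 0 k)^*)); last first.
  by rewrite rmorphM /= conjCK mulrC.
by rewrite mulrAC.
Qed.

Lemma herm_entry d (M : 'M[C]_d) k l : M^t* = M -> M k l = (M l k)^*.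
Proof. by move=> h; rewrite -{1}h !mxE. Qed.

Lemma decomp d n (X : 'I_n -> 'M[R]_d) (hsym : forall i, (X i)^T = X i)
  (hcomm : forall i j, X i *m X j = X j *m X i) :
  exists L : 'M[R]_(d,n), forall v : 'rV[R]_d, exists p : 'I_d -> R,
   [/\ forall k, 0 <= p k,
    forall i, ((v *m X i) *m v^T) 0 0 = \sum_k p k * L k i &
    forall i j, ((v *m X i) *m (v *m X j)^T) 0 0 = \sum_k p k * (L k i * L k j)].
Proof.
pose Xc i := map_mx fC (X i).
have comm : {in [seq Xc i | i <- enum 'I_n] &, forall A B, comm_mx A B}.
  by move=> _ _ /mapP[i _ ->] /mapP[j _ ->]; rewrite /comm_mx -!map_mxM hcomm.
have [P Pu /allP HP] := cotrigonalization comm.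
have Punit := unitarymx_unit Pu.
have PtP : P^t* *m P = 1%:M by rewrite -invmx_unitary // mulVmx.
have [T Tdef] : exists T : 'I_n -> 'M[C]_d, forall i, T i = P *m Xc i *m P^t*.
  by exists (fun i => P *m Xc i *m P^t*).
have Ttrig i : is_trig_mx (T i).
  have := HP (Xc i) (map_f _ (mem_enum _ i)).
  by rewrite /= /similar_to conjumx // invmx_unitary // Tdef.
have Xch i : (Xc i)^t* = Xc i.
  by apply/matrixP => k l; rewrite !mxE conj_fC -[X i in RHS]hsym mxE.
have Therm i : (T i)^t* = T i.
  by rewrite Tdef !trmx_mul !map_mxM trmxCK Xch mulmxA.
have Tdiag i k l : k != l -> T i k l = 0.
  move=> kl; case: (ltngtP k l) => h.
  - by have /is_trig_mxP := Ttrig i; apply.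
  - have /is_trig_mxP := Ttrig i; move/(_ _ _ h) => E.
    by rewrite herm_entry ?Therm // E conjC0.
  - by move/val_inj: h kl => ->; rewrite eqxx.
have Treal i k : T i k k = fC (complex.Re (T i k k)).
  by apply: real_of_C; rewrite -herm_entry ?Therm.
pose L : 'M[R]_(d,n) := \matrix_(k, i) complex.Re (T i k k).
have TE i : T i = diag_mx (map_mx fC (\row_k L k i)).
  apply/matrixP => k l; rewrite !mxE; have [<-|kl] := eqVneq k l.
    by rewrite mulr1n -Treal.
  by rewrite Tdiag // mulr0n.
exists L => v.
pose vc := map_mx fC v.
pose w := vc *m P^t*.
have vcE : vc = w *m P by rewrite /w -mulmxA PtP mulmx1.
have vcT : vc^T = P^t* *m w^t*.
  have -> : vc^T = vc^t* by apply/matrixP => a b; rewrite !mxE conj_fC.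
  by rewrite vcE trmx_mul map_mxM.
have sand (M : 'M[C]_d) : (vc *m M *m vc^T) 0 0 = (w *m (P *m M *m P^t*) *m w^t*) 0 0.
  by rewrite vcT {1}vcE !mulmxA.
have fm (A : 'M[R]_1) : fC (A 0 0) = (map_mx fC A) 0 0 by rewrite mxE.
pose p k := complex.Re (w 0 k * (w 0 k)^*).
exists p; split.
- move=> k; have := mul_conjC_ge0 (w 0 k).
  by rewrite (real_of_C (z := w 0 k * (w 0 k)^*)) ?ler0c // rmorphM /= conjCK mulrC.
- move=> i; apply: complexI; rewrite fm !map_mxM -map_trmx -/vc sand -Tdef TE diag_form.
  by congr fC; apply: eq_bigr => k _; rewrite mxE.
- move=> i j; apply: complexI.
  rewrite trmx_mul hsym !mulmxA -(mulmxA v) fm !map_mxM -map_trmx -/vc sand.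
  have -> : P *m (Xc i *m Xc j) *m P^t* = T i *m T j.
    by rewrite !Tdef !mulmxA -(mulmxA _ _ P) PtP mulmx1 ?mulmxA.
  rewrite !TE mulmx_diag.
  have -> : \row_k ((map_mx fC (\row_k0 L k0 i)) 0 k * (map_mx fC (\row_k0 L k0 j)) 0 k)
        = map_mx fC (\row_k (L k i * L k j)).
    by apply/rowP => k; rewrite !mxE rmorphM.
  by rewrite diag_form; congr fC; apply: eq_bigr => k _; rewrite -/(p k) mxE.
Qed.
End Cx.

Theorem theorem19 (R : rcfType) (d n : nat) (X : 'I_n -> 'M[R]_d)
  (hsym : forall i, (X i)^T = X i)
  (hcomm : forall i j, X i *m X j = X j *m X i) :
  exists2 C : R, 0 < C &
    forall v : 'rV[R]_d,
      (\sum_(i < n) ip (v *m X i) v ^+ 2) ^+ 3 <=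
      C * (\sum_(i < n) \sum_(j < n)
             ip (v *m X i) v * ip (v *m X j) v * ip (v *m X i) (v *m X j)) ^+ 2.
Proof.
have [L HL] := decomp hsym hcomm.
have [K K0 HK] := mainL L.
exists K => // v.
have [p [p0 h1 h2]] := HL v.
have -> : \sum_(i < n) ip (v *m X i) v ^+ 2 = Av L p.
  by apply: eq_bigr => i _; rewrite /ip h1.
have -> : \sum_(i < n) \sum_(j < n)
             ip (v *m X i) v * ip (v *m X j) v * ip (v *m X i) (v *m X j) = Sv L p.
  by rewrite SvE; apply: eq_bigr => i _; apply: eq_bigr => j _; rewrite /ip !h1 h2.
exact: HK.
Qed.
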